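(* There exist absolute constants $\varepsilon_0>0$ and $n_0$ such that for the population protocol USD with $n\ge n_0$ and every $t\ge1$: if $\beta_{t-1}\ge\frac12-\varepsilon_0$ and $\gamma_{t-1}\le\varepsilon_0$, then $$\mathbb E_{t-1}[\widetilde\gamma_t]\ge\widetilde\gamma_{t-1}+\frac{1}{12n^2}.$$
   Context: Vertex set $V$, $|V|=n$; opinions in $\Sigma=[k]\cup\{\bot\}$ ($\bot$ = undecided). USD update rule: $\mathsf{update}(\sigma_1,\sigma_2)=\bot$ if $\sigma_1,\sigma_2\in[k]$ and $\sigma_1\ne\sigma_2$; $=\sigma_2$ if $\sigma_1=\bot$; $=\sigma_1$ otherwise. Population protocol USD: given $\mathrm{opn}_t\in\Sigma^V$, an ordered pair $(u,v)$ is chosen uniformly from $V\times V$ (with replacement), $\mathrm{opn}_{t+1}(u)=\mathsf{update}(\mathrm{opn}_t(u),\mathrm{opn}_t(v))$, and all other vertices keep their opinions. Notation: $\alpha_t(i)=|\{u:\mathrm{opn}_t(u)=i\}|/n$, $\beta_t=\sum_{i\in[k]}\alpha_t(i)$, $\gamma_t=\sum_{i\in[k]}\alpha_t(i)^2$, $\widetilde\gamma_t=\gamma_t/\beta_t^2$ if $\beta_t>0$ and $\widetilde\gamma_t=0$ if $\beta_t=0$. $\mathbb E_{t-1}$ is conditional expectation given the natural filtration $\mathcal F_{t-1}$. *)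

(* Defs.v *)
From mathcomp Require Import all_boot all_order all_algebra.
From mathcomp Require Import reals.
Set Implicit Arguments. Unset Strict Implicit. Unset Printing Implicit Defensive.
Import Order.TTheory GRing.Theory Num.Theory.
Local Open Scope ring_scope.

(* Opinions: Sigma = [k] u {bot}, encoded as option 'I_k, None = undecided. *)
Definition update (k : nat) (s1 s2 : option 'I_k) : option 'I_k :=
  match s1, s2 with
  | Some i, Some j => if i == j then s1 else None
  | None, _ => s2
  | Some _, None => s1
  end.

Definition config (n k : nat) := {ffun 'I_n -> option 'I_k}.

Definition usd_step (n k : nat) (opn : config n k) (u v : 'I_n) : config n k :=
  [ffun w => if w == u then update (opn u) (opn v) else opn w].

Section Quantities.
Variable R : realType.

Definition alpha (n k : nat) (opn : config n k) (i : 'I_k) : R :=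
  (#|[set u | opn u == Some i]|)%:R / n%:R.

Definition beta (n k : nat) (opn : config n k) : R :=
  \sum_(i < k) alpha opn i.

Definition gamma (n k : nat) (opn : config n k) : R :=
  \sum_(i < k) alpha opn i ^+ 2.

Definition gtilde (n k : nat) (opn : config n k) : R :=
  if 0 < beta opn then gamma opn / beta opn ^+ 2 else 0.

(* E_{t-1}[f(opn_t)] when opn_{t-1} = opn: (u,v) uniform on V x V. *)
Definition cond_exp_next (n k : nat) (f : config n k -> R) (opn : config n k) : R :=
  (n%:R ^+ 2)^-1 * \sum_(u < n) \sum_(v < n) f (usd_step opn u v).

End Quantities.

(* Main.v *)
Require Import Defs.
From mathcomp Require Import all_boot all_order all_algebra.
From mathcomp Require Import reals.
From mathcomp Require Import ring lra.
Import Order.TTheory GRing.Theory Num.Theory.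
Local Open Scope ring_scope.
Set Implicit Arguments. Unset Strict Implicit. Unset Printing Implicit Defensive.

Section Aux.
Variable R : realType.

Lemma big_optionR (T : finType) (F : option T -> R) :
  \sum_(s : option T) F s = F None + \sum_(i : T) F (Some i).
Proof.
rewrite (bigD1 None) //=; congr (_ + _).
rewrite (reindex_omap Some (fun x => x)) /=; last by case.
by apply: eq_bigl => i; rewrite eqxx.
Qed.

Definition cnt (n k : nat) (opn : config n k) (s : option 'I_k) : R :=
  \sum_(u < n) ((opn u == s)%:R).
Arguments cnt {n k} opn s.

Lemma card_cnt n k (opn : config n k) s :
  (#|[set u | opn u == s]|)%:R = cnt opn s.
Proof.
rewrite -sum1_card natr_sum /cnt big_mkcond /=; apply: eq_bigr => u _.
by rewrite inE; case: (opn u == s).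
Qed.

Lemma reindex_cnt n k (opn : config n k) (F : option 'I_k -> R) :
  \sum_(u < n) F (opn u) = \sum_s cnt opn s * F s.
Proof.
transitivity (\sum_(u < n) \sum_s (opn u == s)%:R * F s).
  apply: eq_bigr => u _; rewrite (bigD1 (opn u)) //= eqxx mul1r big1 ?addr0 //.
  by move=> s /negbTE; rewrite eq_sym => ->; rewrite mul0r.
rewrite exchange_big /=; apply: eq_bigr => s _.
by rewrite /cnt mulr_suml.
Qed.

Lemma cnt_sum n k (opn : config n k) : \sum_s cnt opn s = n%:R.
Proof.
have := reindex_cnt opn (fun _ => 1).
rewrite sumr_const card_ord => E.
rewrite E; apply: eq_bigr => s _; by rewrite mulr1.
Qed.

Lemma cnt_ge0 n k (opn : config n k) s : 0 <= cnt opn s.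
Proof. by apply: sumr_ge0 => u _; rewrite ler0n. Qed.

Definition upd k (s1 s2 : option 'I_k) := update s1 s2.

Lemma cnt_step n k (opn : config n k) u v s :
  cnt (usd_step opn u v) s =
  cnt opn s - (opn u == s)%:R + (update (opn u) (opn v) == s)%:R.
Proof.
rewrite /cnt (bigD1 u) //= [in RHS](bigD1 u) //= ffunE eqxx.
have -> : \sum_(i < n | i != u) ((usd_step opn u v i == s)%:R : R) =
          \sum_(i < n | i != u) ((opn i == s)%:R : R).
  by apply: eq_bigr => i /negbTE Hi; rewrite ffunE Hi.
ring.
Qed.

Definition G k (x : 'I_k -> R) : R :=
  if 0 < \sum_i x i then (\sum_i x i ^+ 2) / (\sum_i x i) ^+ 2 else 0.

Lemma eq_G k (x y : 'I_k -> R) : x =1 y -> G x = G y.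
Proof.
move=> E; rewrite /G.
have -> : \sum_i x i = \sum_i y i by apply: eq_bigr => i _.
have -> : \sum_i x i ^+ 2 = \sum_i y i ^+ 2 by apply: eq_bigr => i _; rewrite E.
by [].
Qed.

Lemma gtilde_G n k (opn : config n k) : (0 < n)%N ->
  gtilde R opn = G (fun i => cnt opn (Some i)).
Proof.
move=> n0.
have nz : n%:R != 0 :> R by rewrite pnatr_eq0 -lt0n.
have np : 0 < n%:R :> R by rewrite ltr0n.
have Eb : beta R opn = (\sum_i cnt opn (Some i)) / n%:R.
  by rewrite /beta mulr_suml; apply: eq_bigr => i _; rewrite /alpha card_cnt.
have Eg : gamma R opn = (\sum_i cnt opn (Some i) ^+ 2) / n%:R ^+ 2.
  rewrite /gamma mulr_suml; apply: eq_bigr => i _; rewrite /alpha card_cnt.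
  by rewrite expr_div_n.
rewrite /gtilde /G Eb Eg pmulr_lgt0 ?invr_gt0 //.
case: ifP => // bp.
by field; rewrite (gt_eqF bp) nz.
Qed.

Lemma sumD1 k (x : 'I_k -> R) (j : 'I_k) (d : R) :
  \sum_l (x l + d * (j == l)%:R) = \sum_l x l + d.
Proof.
rewrite big_split /=; congr (_ + _).
rewrite (bigD1 j) //= eqxx mulr1 big1 ?addr0 // => l.
by rewrite eq_sym => /negbTE ->; rewrite mulr0.
Qed.

Lemma sumsqD1 k (x : 'I_k -> R) (j : 'I_k) (d : R) :
  \sum_l (x l + d * (j == l)%:R) ^+ 2 = \sum_l x l ^+ 2 + 2 * d * x j + d ^+ 2.
Proof.
have E : forall l, (x l + d * (j == l)%:R) ^+ 2
   = x l ^+ 2 + (2 * d * x l + d ^+ 2) * (j == l)%:R.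
  by move=> l; case: (j == l); rewrite /= ?mulr1 ?mulr0; ring.
rewrite (eq_bigr _ (fun l _ => E l)) big_split /= -addrA; congr (_ + _).
rewrite (bigD1 j) //= eqxx mulr1 big1 ?addr0 // => l.
by rewrite eq_sym => /negbTE ->; rewrite mulr0.
Qed.

Lemma G_D1 k (x : 'I_k -> R) (j : 'I_k) (d : R) :
  0 < \sum_l x l + d ->
  G (fun l => x l + d * (j == l)%:R) =
  (\sum_l x l ^+ 2 + 2 * d * x j + d ^+ 2) / (\sum_l x l + d) ^+ 2.
Proof. by move=> h; rewrite /G sumD1 sumsqD1 h. Qed.

Lemma numeric (q b g c : R) :
  0 <= q -> 2 <= b -> 0 <= g -> g <= b ^+ 2 / 2 -> g ^+ 2 <= b * c ->
  1 / 12 <=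
  q * (b * ((g + 1) / (b + 1) ^+ 2 - g / b ^+ 2) + g * (2 / (b + 1) ^+ 2)) +
  (b * (b * (g + 1) / (b - 1) ^+ 2 - b * g / b ^+ 2)
   + g * (- (g + 1) / (b - 1) ^+ 2 - 2 * b / (b - 1) ^+ 2 + g / b ^+ 2)
   + c * (2 / (b - 1) ^+ 2)).
Proof.
move=> q0 b2 g0 gb cs.
have b0 : 0 < b by lra.
have b1 : 0 < b - 1 by lra.
have bp : 0 < b + 1 by lra.
have -> : b * ((g + 1) / (b + 1) ^+ 2 - g / b ^+ 2) + g * (2 / (b + 1) ^+ 2)
   = (b ^+ 2 - g) / (b * (b + 1) ^+ 2).
  by field; rewrite ?(gt_eqF b0) ?(gt_eqF bp) ?(gt_eqF b1).
have t1 : 0 <= q * ((b ^+ 2 - g) / (b * (b + 1) ^+ 2)).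
  apply: mulr_ge0 => //; apply: divr_ge0; first nra.
  by apply: mulr_ge0; [lra | apply: exprn_ge0; lra].
set K := (b - 1) ^+ 2.
have K0 : 0 < K by rewrite /K exprn_gt0.
set P := b ^+ 2 * ((g + 1) * (b ^+ 2 - g) - 2 * b * g + 2 * c) - K * (b ^+ 2 - g) * g.
have -> : b * (b * (g + 1) / K - b * g / b ^+ 2)
   + g * (- (g + 1) / K - 2 * b / K + g / b ^+ 2) + c * (2 / K) = P / (b ^+ 2 * K).
  by rewrite /P /K; field; rewrite ?(gt_eqF b0) ?(gt_eqF bp) ?(gt_eqF b1).
have PE : P * b = b * (b ^+ 2 - g) ^+ 2 + 2 * b ^+ 2 * (b * c - g ^+ 2).
  rewrite /P /K; ring.
have P1 : (b ^+ 2 - g) ^+ 2 <= P.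
  have : b * (b ^+ 2 - g) ^+ 2 <= P * b.
    rewrite PE; have : 0 <= 2 * b ^+ 2 * (b * c - g ^+ 2).
      apply: mulr_ge0; [apply: mulr_ge0; [lra|apply: exprn_ge0; lra] | lra].
    lra.
  by rewrite mulrC ler_pM2r.
have P2 : b ^+ 2 * K <= 4 * (b ^+ 2 - g) ^+ 2.
  rewrite /K; nra.
have D : 0 < b ^+ 2 * K by rewrite mulr_gt0 // exprn_gt0.
have : 1 / 12 <= P / (b ^+ 2 * K).
  rewrite ler_pdivlMr // mul1r.
  nra.
lra.
Qed.

Lemma sum_cst_split k (N : option 'I_k -> R) (c : R) (f : option 'I_k -> R) :
  \sum_s N s * (c + f s) = (\sum_s N s) * c + \sum_s N s * f s.
Proof. by rewrite mulr_suml -big_split /=; apply: eq_bigr => s _; rewrite mulrDr. Qed.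

Lemma sum_lin3 k (x : 'I_k -> R) C1 C2 C3 :
  \sum_i (x i * C1 + x i ^+ 2 * C2 + x i ^+ 3 * C3)
  = (\sum_i x i) * C1 + (\sum_i x i ^+ 2) * C2 + (\sum_i x i ^+ 3) * C3.
Proof. by rewrite !big_split /= !mulr_suml. Qed.

Lemma main_ineq n k (opn : config n k) : (0 < n)%N ->
  2 <= \sum_i cnt opn (Some i) ->
  \sum_i cnt opn (Some i) ^+ 2 <= (\sum_i cnt opn (Some i)) ^+ 2 / 2 ->
  G (fun i => cnt opn (Some i)) + 1 / (12 * n%:R ^+ 2)
    <= cond_exp_next (@gtilde R n k) opn.
Proof.
move=> n0 b2 gb.
set a := fun i => cnt opn (Some i).
set N := cnt opn.
pose H s1 s2 := G (fun l => a l - (s1 == Some l)%:R + (update s1 s2 == Some l)%:R).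
have E1 : \sum_(u < n) \sum_(v < n) gtilde R (usd_step opn u v)
    = \sum_s1 N s1 * \sum_s2 N s2 * H s1 s2.
  transitivity (\sum_(u < n) \sum_s2 N s2 * H (opn u) s2).
    apply: eq_bigr => u _; rewrite -(reindex_cnt opn (H (opn u))).
    apply: eq_bigr => v _; rewrite gtilde_G //; apply: eq_G => l.
    by rewrite cnt_step.
  by rewrite (reindex_cnt opn (fun s1 => \sum_s2 N s2 * H s1 s2)).
set b := \sum_i a i.
set g := \sum_i a i ^+ 2.
set c := \sum_i a i ^+ 3.
have b0 : 0 < b by rewrite /b; lra.
have Ga : G a = g / b ^+ 2 by rewrite /G b0.
have HNN : H None None = G a by apply: eq_G => l /=; rewrite subr0 addr0.
have HNS j : H None (Some j) = G (fun l => a l + 1 * (j == l)%:R).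
  by apply: eq_G => l /=; rewrite subr0 mul1r.
have HSN i : H (Some i) None = G a by apply: eq_G => l /=; rewrite subrK.
have HSS i j : H (Some i) (Some j) =
    if i == j then G a else G (fun l => a l + (-1) * (i == l)%:R).
  case: eqVneq => [<-|ne]; apply: eq_G => l /=; first by rewrite eqxx subrK.
  by rewrite (negbTE ne) /= addr0 mulN1r.
have ns : \sum_s N s = n%:R by exact: cnt_sum.
have split1 s1 : \sum_s2 N s2 * H s1 s2
    = n%:R * G a + \sum_s2 N s2 * (H s1 s2 - G a).
  rewrite -ns -sum_cst_split; apply: eq_bigr => s _; congr (_ * _); ring.
pose Z j := G (fun l => a l + 1 * (j == l)%:R) - G a.
pose Y i := G (fun l => a l + (-1) * (i == l)%:R) - G a.
have WN : \sum_s2 N s2 * (H None s2 - G a) = \sum_j a j * Z j.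
  rewrite big_optionR HNN subrr mulr0 add0r; apply: eq_bigr => j _.
  by rewrite HNS.
have WS i : \sum_s2 N s2 * (H (Some i) s2 - G a) = (b - a i) * Y i.
  rewrite big_optionR HSN subrr mulr0 add0r.
  rewrite (bigD1 i) //= HSS eqxx subrr mulr0 add0r.
  have -> : b - a i = \sum_(j | j != i) a j by rewrite /b (bigD1 i) //= addrAC subrr add0r.
  rewrite mulr_suml; apply: eq_bigr => j ne.
  by rewrite HSS eq_sym (negbTE ne).
have ET : \sum_s1 N s1 * \sum_s2 N s2 * H s1 s2 =
    n%:R ^+ 2 * G a + (N None * \sum_j a j * Z j + \sum_i a i * ((b - a i) * Y i)).
  under eq_bigr => s1 _ do rewrite split1.
  rewrite sum_cst_split ns big_optionR WN.
  rewrite expr2 mulrA; congr (_ + (_ + _)); apply: eq_bigr => i _.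
  by rewrite WS.
have Zv j : Z j = (g + 2 * 1 * a j + 1 ^+ 2) / (b + 1) ^+ 2 - g / b ^+ 2.
  by rewrite /Z G_D1 ?Ga //; lra.
have Yv i : Y i = (g + 2 * (-1) * a i + (-1) ^+ 2) / (b + -1) ^+ 2 - g / b ^+ 2.
  by rewrite /Y G_D1 ?Ga //; lra.
have S1 : \sum_j a j * Z j
    = b * ((g + 1) / (b + 1) ^+ 2 - g / b ^+ 2) + g * (2 / (b + 1) ^+ 2).
  transitivity (\sum_j (a j * ((g + 1) / (b + 1) ^+ 2 - g / b ^+ 2)
      + a j ^+ 2 * (2 / (b + 1) ^+ 2) + a j ^+ 3 * 0)).
    by apply: eq_bigr => j _; rewrite Zv; ring.
  rewrite sum_lin3 -/b -/g; ring.
have S2 : \sum_i a i * ((b - a i) * Y i) =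
   b * (b * (g + 1) / (b - 1) ^+ 2 - b * g / b ^+ 2)
   + g * (- (g + 1) / (b - 1) ^+ 2 - 2 * b / (b - 1) ^+ 2 + g / b ^+ 2)
   + c * (2 / (b - 1) ^+ 2).
  transitivity (\sum_i (a i * (b * (g + 1) / (b - 1) ^+ 2 - b * g / b ^+ 2)
   + a i ^+ 2 * (- (g + 1) / (b - 1) ^+ 2 - 2 * b / (b - 1) ^+ 2 + g / b ^+ 2)
   + a i ^+ 3 * (2 / (b - 1) ^+ 2))).
    by apply: eq_bigr => i _; rewrite Yv; ring.
  by rewrite sum_lin3 -/b -/g -/c.
have a0 i : 0 <= a i by exact: cnt_ge0.
have g0 : 0 <= g by apply: sumr_ge0 => i _; apply: exprn_ge0.
have CS : g ^+ 2 <= b * c.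
  have : 0 <= \sum_i a i * (a i - g / b) ^+ 2.
    by apply: sumr_ge0 => i _; apply: mulr_ge0 => //; apply: sqr_ge0.
  have -> : \sum_i a i * (a i - g / b) ^+ 2
      = c - 2 * (g / b) * g + (g / b) ^+ 2 * b.
    transitivity (\sum_i (a i * ((g / b) ^+ 2) + a i ^+ 2 * (- 2 * (g / b))
      + a i ^+ 3 * 1)).
      by apply: eq_bigr => i _; ring.
    rewrite sum_lin3 -/b -/g -/c; ring.
  move=> h.
  have : 0 <= b * (c - 2 * (g / b) * g + (g / b) ^+ 2 * b) by apply: mulr_ge0 => //; lra.
  have -> : b * (c - 2 * (g / b) * g + (g / b) ^+ 2 * b) = b * c - g ^+ 2.
    by field; rewrite gt_eqF.
  lra.
have Tge : 1 / 12 <= N None * \sum_j a j * Z j + \sum_i a i * ((b - a i) * Y i).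
  rewrite S1 S2; apply: numeric => //; exact: cnt_ge0.
rewrite /cond_exp_next E1 ET mulrDr.
rewrite [_ ^- 2 * (_ * G a)]mulrA mulVf ?mul1r; last first.
  by rewrite expf_neq0 // pnatr_eq0 -lt0n.
rewrite lerD2l.
have np : 0 < n%:R ^+ 2 :> R by rewrite exprn_gt0 // ltr0n.
have -> : (12 * n%:R ^+ 2)^-1 = (n%:R ^+ 2)^-1 * (1 / 12) :> R.
  by field; rewrite pnatr_eq0 -lt0n.
by rewrite ler_wpM2l // invr_ge0 ltW.
Qed.

Lemma beta_cnt n k (opn : config n k) :
  beta R opn = (\sum_i cnt opn (Some i)) / n%:R.
Proof. by rewrite /beta mulr_suml; apply: eq_bigr => i _; rewrite /alpha card_cnt. Qed.

Lemma gamma_cnt n k (opn : config n k) :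
  gamma R opn = (\sum_i cnt opn (Some i) ^+ 2) / n%:R ^+ 2.
Proof.
rewrite /gamma mulr_suml; apply: eq_bigr => i _; rewrite /alpha card_cnt.
by rewrite expr_div_n.
Qed.

End Aux.

Theorem mainTheorem15 (R : realType) :
  exists eps0 : R, 0 < eps0 /\
  exists n0 : nat,
    forall (n k : nat) (opn : config n k),
      (n0 <= n)%N ->
      1 / 2 - eps0 <= beta R opn ->
      gamma R opn <= eps0 ->
      gtilde R opn + 1 / (12 * n%:R ^+ 2) <= cond_exp_next (@gtilde R n k) opn.
Proof.
exists (1 / 20); split; first lra.
exists 5%N => n k opn n5 hb hg.
have n0 : (0 < n)%N by apply: leq_trans n5.
have N5 : 5 <= n%:R :> R by rewrite (ler_nat R 5 n).
have Np : 0 < n%:R :> R by lra.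
rewrite gtilde_G //; apply: main_ineq => //.
  rewrite beta_cnt ler_pdivlMr // in hb; lra.
rewrite gamma_cnt ler_pdivrMr ?exprn_gt0 // in hg.
rewrite beta_cnt ler_pdivlMr // in hb.
set b := \sum_i _ in hb *.
set g := \sum_i _ in hg *.
have h1 : (1 / 2 - 1 / 20) * n%:R <= b by lra.
have h0 : 0 <= (1 / 2 - 1 / 20) * n%:R :> R by lra.
have h2 : ((1 / 2 - 1 / 20) * n%:R) ^+ 2 <= b ^+ 2.
  by rewrite ler_pXn2r // ?nnegrE //; lra.
have h3 : ((1 / 2 - 1 / 20) * n%:R) ^+ 2 = 81 / 400 * n%:R ^+ 2 :> R.
  by rewrite exprMn; congr (_ * _); field.
have h4 : 0 <= n%:R ^+ 2 :> R by apply: exprn_ge0; lra.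
lra.
Qed.
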